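(* Let $E=\begin{pmatrix}1&0\\0&z\end{pmatrix}$, $U=\begin{pmatrix}x&z\\1&0\end{pmatrix}$ and $P=UE$, matrices over $\mathrm{GF}(2)[x,z]$, acting on row vectors from the right. Then (i) for $n\ge0$, $(f^{(n+1)},g^{(n+1)})=(f^{(n)},g^{(n)})M_n$ where $M_n=E$ if $n$ is even and $M_n=U$ if $n$ is odd; (ii) for $i\ge1$, $$(f^{(2i)},g^{(2i)})=(x+z,z^2)\,P^{i-1}U\quad\text{and}\quad (f^{(2i+1)},g^{(2i+1)})=(x+z,z^2)\,P^{i}.$$
   Context: $\mathbb{F}=\mathrm{GF}(2)$, $R=\mathbb{F}[x,z]$, $|\cdot|$ is total degree. Let $(r_0,r_1,\ldots)$ be the binary sequence with $r_i=1$ if $i=2^j-1$ for some $j\ge 0$ and $r_i=0$ otherwise. For $n\ge1$ its inverse form is $R^{(1-n)}=\sum_{j=1-n}^{0}r_{-j}\,x^{j}z^{1-n-j}\in\mathbb{F}[x^{-1},z^{-1}]$. For a form $f\in R$ and such a form $G$, $\Delta(f;G)$ is the coefficient of $x^{|f|+|G|}z^0$ in $f\cdot G$ computed in $\mathbb{F}[x^{\pm1},z^{\pm1}]$ if $|f|+|G|\le 0$, and $0$ otherwise. Define forms recursively: $(f^{(0)},g^{(0)})=(x+z,z)$; for $k\ge0$ let $d_k=|g^{(k)}|-|f^{(k)}|$ and $\Delta_k=\Delta(f^{(k)};R^{(-1-k)})$, and set $(f^{(k+1)},g^{(k+1)})=(f^{(k)},zg^{(k)})$ if $\Delta_k=0$;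 $=(f^{(k)}+x^{-d_k}g^{(k)},\,zg^{(k)})$ if $\Delta_k=1$ and $d_k\le0$; $=(x^{d_k}f^{(k)}+g^{(k)},\,zf^{(k)})$ if $\Delta_k=1$ and $d_k>0$. *)

(* Defs.v *)
From HB Require Import structures.
From mathcomp Require Import all_boot all_order all_algebra.
From mathcomp Require Import mpoly.
Set Implicit Arguments. Unset Strict Implicit. Unset Printing Implicit Defensive.
Import GRing.Theory.
Local Open Scope ring_scope.

Definition F := 'F_2.
Definition R := {mpoly F[2]}.
Definition vx : R := 'X_(0 : 'I_2).
Definition vz : R := 'X_(1 : 'I_2).

(* Total degree |f| (forms are nonzero here; |0| is taken to be 0). *)
Definition tdeg (f : R) : nat := (msize f).-1.

Definition coefxz (f : R) (a b : nat) : F :=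
  f@_[multinom (if i == 0 :> nat then a else b) | i < 2].

(* r_i = 1 iff i = 2^j - 1 for some j >= 0 (such a j necessarily satisfies j <= i). *)
Definition in_r (i : nat) : bool := [exists j : 'I_i.+1, i == (2 ^ j).-1]%N.
Definition rseq (i : nat) : F := (in_r i)%:R.

(* Delta(f; R^{(1-n)}) for n >= 1, where
   R^{(1-n)} = sum_{j=1-n}^{0} r_{-j} x^j z^{1-n-j}, of degree 1-n.
   The coefficient of x^{|f|+1-n} z^0 in f * R^{(1-n)} (in the Laurent ring)
   is, writing m = -j in [0, n-1], the sum of r_m times the coefficient of
   x^{|f|+1-n+m} z^{n-1-m} in f (zero when |f|+1-n+m < 0).
   When |f| + (1-n) > 0 the value is 0. *)
Definition Delta (f : R) (n : nat) : F :=
  if (tdeg f < n)%N then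
    \sum_(m < n | (n.-1 - m <= tdeg f)%N)
      rseq m * coefxz f (tdeg f - (n.-1 - m)) (n.-1 - m)
  else 0.

(* One step of the recursion: given (f^(k), g^(k)), compute (f^(k+1), g^(k+1)).
   Delta_k = Delta(f^(k); R^(-1-k)), i.e. n = k+2.
   d_k = |g| - |f|; the case d_k <= 0 uses x^{-d_k} = x^{|f|-|g|}. *)
Definition step (k : nat) (fg : R * R) : R * R :=
  let: (f, g) := fg in
  if Delta f k.+2 == 0 then (f, vz * g)
  else if (tdeg g <= tdeg f)%N then (f + vx ^+ (tdeg f - tdeg g) * g, vz * g)
  else (vx ^+ (tdeg g - tdeg f) * f + g, vz * f).

Fixpoint fgseq (k : nat) : R * R :=
  match k with
  | 0 => (vx + vz, vz)
  | k'.+1 => step k' (fgseq k')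
  end.

Definition rowv (f g : R) : 'rV[R]_2 :=
  \row_(j < 2) (if j == 0 :> nat then f else g).

Definition mx2 (a b c d : R) : 'M[R]_2 :=
  \matrix_(i < 2, j < 2)
    (if i == 0 :> nat then (if j == 0 :> nat then a else b)
     else (if j == 0 :> nat then c else d)).

Definition Emx : 'M[R]_2 := mx2 1 0 0 vz.
Definition Umx : 'M[R]_2 := mx2 vx vz 1 0.
Definition Pmx : 'M[R]_2 := Umx *m Emx.
Definition Mmx (n : nat) : 'M[R]_2 := if odd n then Umx else Emx.

(* Main.v *)
Require Import Defs.
From HB Require Import structures.
From mathcomp Require Import all_boot all_order all_algebra.
From mathcomp Require Import mpoly ring zify.
Set Implicit Arguments. Unset Strict Implicit. Unset Printing Implicit Defensive.
Import GRing.Theory.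
Local Open Scope ring_scope.

Notation PF := {poly F}.

Lemma two0 : (2%:R : PF) = 0.
Proof. by rewrite -polyC_natr (@pchar_Fp_0 2). Qed.

Lemma xx (a : PF) : a + a = 0.
Proof. by rewrite -mulr2n -mulr_natr two0 mulr0. Qed.

Lemma oppc2 (a : PF) : - a = a.
Proof. by apply/eqP; rewrite eq_sym -addr_eq0 xx. Qed.

Lemma sq2 (a b : PF) : (a + b)^+2 = a^+2 + b^+2.
Proof.
have -> : (a + b)^+2 = a^+2 + b^+2 + (a * b + a * b) by ring.
by rewrite xx addr0.
Qed.

Lemma Fsq (c : F) : c ^+ 2 = c.
Proof. case: c => -[|[|n]] hn; apply: val_inj => //=. Qed.

Lemma frob (p : PF) : p ^+ 2 = p \Po 'X^2.
Proof.
elim/poly_ind: p => [|p c IH]; first by rewrite expr0n comp_poly0.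
rewrite sq2 comp_polyD comp_polyM comp_polyX comp_polyC -IH exprMn -polyC_exp Fsq.
by [].
Qed.

Definition sJ (J : nat) : PF := \sum_(j < J.+1) 'X^(2^j).
Definition eK (J : nat) : PF := 'X^(2^J.+1).

Lemma sq_sum (I : Type) (r : seq I) (P : pred I) (G : I -> PF) :
  (\sum_(i <- r | P i) G i)^+2 = \sum_(i <- r | P i) (G i)^+2.
Proof.
elim/big_rec2: _ => [|i a b _ <-]; first by rewrite expr0n.
by rewrite sq2.
Qed.

Lemma sJ_eq J : sJ J = (sJ J)^+2 + 'X + eK J.
Proof.
rewrite {2}/sJ sq_sum.
under eq_bigr do rewrite -exprM -expnSr.
rewrite big_ord_recr /= /sJ big_ord_recl /= expn0 expr1 /eK.
have -> : forall a b c : PF, a + b + c + b = c + a + (b + b) by move=> *; ring.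
by rewrite xx addr0.
Qed.

Fixpoint Fp (n : nat) : PF :=
  match n with
  | 0 => 1
  | m.+1 => match m with 0 => 1 + 'X | k.+1 => Fp m + 'X^2 * Fp k end
  end.

Lemma FpSS n : Fp n.+2 = Fp n.+1 + 'X^2 * Fp n.
Proof. by []. Qed.

Lemma Phi (s t v e : PF) (hs : s = t + 'X + e) (ht : t^+2 = t + 'X^2 + e^+2)
  (hv : v^+2 = v + 'X^2 + e^+2) (hv1 : v = 1 + t) :
  forall m, exists E, Fp m * s = t^+m.+1 + 'X * v^+m + e * E.
Proof.
have H : forall m, (exists E, Fp m * s = t^+m.+1 + 'X * v^+m + e * E) /\
                   (exists E, Fp m.+1 * s = t^+m.+2 + 'X * v^+m.+1 + e * E).
  elim=> [|m [[E1 h1] [E2 h2]]].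
    split.
      exists 1; rewrite /= hs; ring.
    exists (1 + 'X - e); rewrite /= hs ht hv1; ring.
  split; first by exists E2.
  exists (E2 + 'X^2 * E1 - e * (t^+m.+1 + 'X * v^+m)).
  rewrite FpSS mulrDl -mulrA h2 h1.
  have -> : t^+m.+3 = t^+m.+1 * t^+2 by rewrite -exprD addn2.
  have -> : v^+m.+2 = v^+m * v^+2 by rewrite -exprD addn2.
  rewrite ht hv !exprS; ring.
by move=> m; case: (H m).
Qed.

Lemma sq_ev (p : PF) k : (p^+2)`_(k.*2) = p`_k.
Proof.
rewrite frob coef_comp_poly_Xn // -muln2 dvdn_mull // mulnK //.
Qed.

Lemma sq_od (p : PF) k : (p^+2)`_(k.*2.+1) = 0.
Proof.
rewrite frob coef_comp_poly_Xn //.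
by rewrite dvdn2 /= odd_double.
Qed.

Lemma ucoef (u : PF) K (hu : u = u^+2 + 'X + 'X^K) :
  forall m, (m < K)%N -> (u^+m)`_m = 1.
Proof.
elim/ltn_ind=> m IH hm.
case: m IH hm => [|m] IH hm; first by rewrite expr0 coef1.
have [k hk] : exists k, (m.+1 = k.*2 + odd m.+1)%N by exists (m.+1)./2; rewrite addnC odd_double_half.
have hev : (u ^+ k.*2)`_(k.*2) = 1.
  have [->|kpos] := posnP k; first by rewrite expr0 coef1.
  have -> : u ^+ k.*2 = (u ^+ k)^+2 by rewrite -exprM muln2.
  rewrite sq_ev IH //.
    move: hk kpos; case: (odd m.+1); rewrite -addnn; lia.
  move: hk kpos hm; case: (odd m.+1); rewrite -addnn; lia.
move: hk; case: (odd m.+1) => hk.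
  rewrite hk addn1 exprSr {2}hu !mulrDr !coefD.
  have -> : u ^+ k.*2 * u ^+ 2 = (u ^+ k.+1)^+2 by rewrite -exprD -exprM muln2 doubleS addn2.
  rewrite sq_od.
  rewrite coefMX /= hev coefMXn.
  by rewrite -(addn1 k.*2) -hk hm add0r addr0.
by rewrite hk addn0.
Qed.

Lemma swap2 (a b c : PF) : a = b + c -> b = a + c.
Proof. by move->; rewrite -addrA xx addr0. Qed.

Lemma sJX J : sJ J = 'X * \sum_(j < J.+1) 'X^((2^j).-1).
Proof.
rewrite big_distrr /=; apply: eq_bigr => j _.
by rewrite -exprS prednK // expn_gt0.
Qed.

Lemma Fcoef J m : (m.*2.+1 < 2^J.+1)%N ->
  (Fp m * sJ J)`_(m.*2) = 0 /\ (Fp m * sJ J)`_(m.*2.+1) = 1.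
Proof.
move=> hm.
set s : PF := sJ J; set e : PF := eK J; set t : PF := s^+2; set v : PF := 1 + t.
have hs : s = t + 'X + e by rewrite /s sJ_eq.
have h0 : t = t^+2 + ('X^2 + e^+2) by rewrite {1}/t {1}hs !sq2 addrA.
have ht : t^+2 = t + 'X^2 + e^+2 by rewrite -addrA; apply: swap2.
have hv : v^+2 = v + 'X^2 + e^+2 by rewrite /v sq2 expr1n ht !addrA.
have [E hE] := Phi hs ht hv (erefl v) m.
set u : PF := 1 + s.
have hvu : v = u^+2 by rewrite /u sq2 expr1n.
have hu : u = u^+2 + 'X + 'X^(2^J.+1) by rewrite -hvu /u /v {1}hs !addrA.
have huc := ucoef hu.
have ht0 : forall j, (j < m.*2.+2)%N -> (t^+m.+1)`_j = 0.
  move=> j hj; rewrite /t -(exprM s) /s sJX exprMn coefXnM.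
  by rewrite mul2n doubleS hj.
have he0 : forall j, (j < 2^J.+1)%N -> (e * E)`_j = 0.
  by move=> j hj; rewrite /e /eK coefXnM hj.
have hm' : (m.*2 < 2^J.+1)%N by apply: ltnW.
rewrite hE; split; rewrite !coefD ht0 // he0 //.
  rewrite add0r addr0 coefXM /=.
  case: m hm hm' {hE ht0} => [|m] hm hm' //=.
  rewrite hvu -exprM mulnC exprM; exact: sq_od.
rewrite (@add0r F) (@addr0 F) coefXM /= hvu -exprM mulnC exprM sq_ev huc //.
move: hm; rewrite -addnn; lia.
Qed.

Lemma sJ_coef J c : (sJ J)`_c = ([exists j : 'I_J.+1, c == 2^j]%N)%:R.
Proof.
rewrite /sJ coef_sum.
under eq_bigr do rewrite coefXn.
case: existsP => [[j0 hj0]|hn].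
  rewrite (bigD1 j0) //= hj0 big1 ?addr0 // => j hj.
  rewrite (eqP hj0) eqn_exp2l //.
  by case: eqP => // hjj; case/eqP: hj; apply: val_inj.
by rewrite big1 // => j _; case: eqP => // hc; case: hn; exists j; apply/eqP.
Qed.

Lemma rseq_s n c : (0 < c <= n)%N -> rseq c.-1 = (sJ n)`_c.
Proof.
case/andP=> c0 cn.
rewrite sJ_coef /rseq /in_r prednK //.
congr ((nat_of_bool _)%:R).
apply/existsP/existsP => [[j hj]|[j hj]].
  have hj' : (c = 2^j)%N.
    have e1 : c.-1.+1 = (2^j).-1.+1 by rewrite (eqP hj).
    by rewrite prednK // prednK ?expn_gt0 in e1.
  have jn : (j < n.+1)%N.
    by apply: (leq_trans (ltn_ord j)); apply: leqW.
  by exists (Ordinal jn); apply/eqP; exact: hj'.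
have jc : (j < c)%N by rewrite (eqP hj) ltn_expl.
by exists (Ordinal jc); rewrite /= -(eqP hj).
Qed.

Definition mono (a b : nat) : 'X_{1..2} :=
  [multinom (if i == 0 :> nat then a else b) | i < 2].

Definition hom (d : nat) (q : PF) : R :=
  \sum_(b < d.+1) q`_b *: 'X_[mono (d - b) b].

Lemma mono_inj a b a' b' : mono a b = mono a' b' -> a = a' /\ b = b'.
Proof.
move/mnmP=> h; have h0 := h (0 : 'I_2); have h1 := h (1 : 'I_2).
by rewrite !mnmE /= in h0 h1.
Qed.

Lemma mdeg_mono a b : mdeg (mono a b) = (a + b)%N.
Proof. by rewrite mdegE !big_ord_recl big_ord0 !mnmE /= addn0. Qed.

Lemma coefxz_hom d (q : PF) b : (b <= d)%N -> coefxz (hom d q) (d - b) b = q`_b.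
Proof.
move=> bd.
change ((hom d q)@_(mono (d - b) b) = q`_b).
rewrite /hom raddf_sum.
have bd' : (b < d.+1)%N by [].
rewrite (bigD1 (Ordinal bd')) //= mcoeffZ mcoeffX eqxx mulr1 big1 ?addr0 //.
move=> j hj; rewrite mcoeffZ mcoeffX.
case: eqP => [/mono_inj [_ hjb]|]; last by rewrite mulr0.
by case/eqP: hj; apply: val_inj.
Qed.

Definition i0 : 'I_2 := ord0.
Definition i1 : 'I_2 := Ordinal (isT : (1 < 2)%N).
Lemma vxE : vx = 'X_[U_(i0)]. Proof. by []. Qed.
Lemma vzE : vz = 'X_[U_(i1)]. Proof. by []. Qed.

Lemma U1_mono a b : (U_(i1) + mono a b)%MM = mono a b.+1.
Proof. by apply/mnmP => i; rewrite mnmDE !mnmE; case: i => -[|[|]]. Qed.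

Lemma U0_mono a b : (U_(i0) + mono a b)%MM = mono a.+1 b.
Proof. by apply/mnmP => i; rewrite mnmDE !mnmE; case: i => -[|[|]]. Qed.

Lemma vz_hom d (q : PF) : vz * hom d q = hom d.+1 ('X * q).
Proof.
rewrite /hom big_distrr [in RHS]big_ord_recl /= coefXM /= scale0r add0r.
apply: eq_bigr => b _.
rewrite -scalerAr vzE -mpolyXD U1_mono coefXM /=.
by rewrite /bump /= add1n subSS.
Qed.

Lemma vx_hom d (q : PF) : (size q <= d.+1)%N -> vx * hom d q = hom d.+1 q.
Proof.
move=> sq.
rewrite /hom big_distrr [in RHS]big_ord_recr /= nth_default // scale0r addr0.
apply: eq_bigr => b _.
by rewrite -scalerAr vxE -mpolyXD U0_mono subSn // -ltnS.
Qed.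

Lemma hom_add d p q : hom d p + hom d q = hom d (p + q).
Proof.
rewrite /hom -big_split /=; apply: eq_bigr => b _.
by rewrite coefD scalerDl.
Qed.

Lemma tdeg_hom d (q : PF) : (size q <= d.+1)%N -> q != 0 -> tdeg (hom d q) = d.
Proof.
move=> sq nq.
have le : (msize (hom d q) <= d.+1)%N.
  apply: leq_trans (msize_sum _ _ _) _.
  apply/bigmax_leqP => b _.
  apply: leq_trans (msizeZ_le _ _) _.
  by rewrite msizeX mdeg_mono subnK // -ltnS.
set b := (size q).-1.
have bd : (b <= d)%N by rewrite /b -ltnS prednK // lt0n size_poly_eq0.
have nz : (hom d q)@_(mono (d - b) b) != 0.
  have := coefxz_hom q bd; rewrite /coefxz => ->.
  by rewrite /b -lead_coefE lead_coef_eq0.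
have : mono (d - b) b \in msupp (hom d q) by rewrite mcoeff_msupp.
move/msize_mdeg_lt; rewrite mdeg_mono subnK // => lt.
rewrite /tdeg; apply/eqP; rewrite -eqSS prednK; last by apply: leq_ltn_trans lt.
by rewrite eqn_leq le lt.
Qed.

Lemma Delta_hom d (q : PF) n : (size q <= d.+1)%N -> q != 0 -> (d < n)%N ->
  Delta (hom d q) n = (q * sJ n)`_n.
Proof.
move=> sq nq dn.
rewrite /Delta tdeg_hom // dn.
rewrite (eq_bigr (fun m : 'I_n => rseq m * q`_(n.-1 - m))); last first.
  by move=> m hm; rewrite coefxz_hom.
rewrite big_mkcond /= (reindex_inj rev_ord_inj) /=.
rewrite coefM big_ord_recr /= subnn.
have -> : (sJ n)`_0 = 0 by rewrite sJ_coef; case: existsP => // -[j]; rewrite eq_sym expn_eq0.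
rewrite mulr0 addr0; apply: eq_bigr => j _.
have jn := ltn_ord j.
have -> : (n.-1 - (n - j.+1) = j)%N by lia.
case: leqP => hj.
  rewrite mulrC -rseq_s ?subnS //.
  by apply/andP; split; lia.
by rewrite nth_default ?mul0r //; apply: leq_trans sq hj.
Qed.

Lemma Fp_size m : (size (Fp m) <= m.+1)%N.
Proof.
have H : forall k, (size (Fp k) <= k.+1)%N /\ (size (Fp k.+1) <= k.+2)%N.
  elim=> [|k [h1 h2]]; first by split; rewrite /= ?size_poly1 // (leq_trans (size_polyD _ _)) // geq_max size_poly1 size_polyX.
  split => //; rewrite FpSS (leq_trans (size_polyD _ _)) // geq_max (leq_trans h2) //=.
  rewrite (leq_trans (size_polyMleq _ _)) // size_polyXn.
  by rewrite !addSn /= add0n !ltnS.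
by case: (H m).
Qed.

Lemma Fp0 m : (Fp m)`_0 = 1.
Proof.
have H : forall k, (Fp k)`_0 = 1 /\ (Fp k.+1)`_0 = 1.
  elim=> [|k [h1 h2]]; first by rewrite /= coefD coef1 coefX /= addr0.
  by split => //; rewrite FpSS coefD h2 coefXnM /= addr0.
by case: (H m).
Qed.

Lemma Fp_neq0 m : Fp m != 0.
Proof. by apply/eqP => h; have := Fp0 m; rewrite h coef0 => /eqP; rewrite eq_sym oner_eq0. Qed.

Lemma XFp_neq0 k m : 'X^k * Fp m != 0.
Proof. by rewrite mulf_neq0 ?Fp_neq0 // monic_neq0 // monicXn. Qed.

Lemma XFp_size k m : (size ('X^k * Fp m)%R <= m.+1 + k)%N.
Proof.
rewrite (leq_trans (size_polyMleq _ _)) // size_polyXn addSn /= addnC.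
by rewrite leq_add2r Fp_size.
Qed.

Lemma step_even i : step (2*i) (hom i.+1 (Fp i.+1), hom i.+1 ('X * Fp i)) =
  (hom i.+1 (Fp i.+1), vz * hom i.+1 ('X * Fp i)).
Proof.
rewrite /step Delta_hom ?Fp_size ?Fp_neq0 //; last lia.
have h : (i.+1.*2.+1 < 2 ^ (2 * i).+3)%N.
  apply: leq_trans (ltn_expl _ (isT : (1 < 2)%N)); lia.
have E : ((2 * i).+2 = i.+1.*2)%N by lia.
by have := proj1 (Fcoef h); rewrite -E => ->; rewrite eqxx.
Qed.

Lemma step_odd i : step (2*i).+1 (hom i.+1 (Fp i.+1), hom i.+2 ('X^2 * Fp i)) =
  (vx * hom i.+1 (Fp i.+1) + hom i.+2 ('X^2 * Fp i), vz * hom i.+1 (Fp i.+1)).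
Proof.
rewrite /step Delta_hom ?Fp_size ?Fp_neq0 //; last lia.
have h : (i.+1.*2.+1 < 2 ^ (2 * i).+4)%N.
  apply: leq_trans (ltn_expl _ (isT : (1 < 2)%N)); lia.
have E : ((2 * i).+3 = i.+1.*2.+1)%N by lia.
have := proj2 (Fcoef h); rewrite -E => ->; rewrite oner_eq0.
rewrite !tdeg_hom ?Fp_size ?Fp_neq0 ?XFp_neq0 //; last first.
  by apply: leq_trans (XFp_size _ _) _; rewrite addn2.
by rewrite ltnn subSn // subnn expr1.
Qed.

Lemma hom1 (q : PF) : hom 1 q = q`_0 *: vx + q`_1 *: vz.
Proof.
rewrite /hom big_ord_recr big_ord_recr big_ord0 /= add0r vxE vzE.
congr (_ *: 'X_[_] + _ *: 'X_[_]); apply/mnmP => j; rewrite !mnmE;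
  by case: j => -[|[|]].
Qed.

Lemma inv i : fgseq (2*i) = (hom i.+1 (Fp i.+1), hom i.+1 ('X * Fp i)) /\
  fgseq (2*i).+1 = (hom i.+1 (Fp i.+1), hom i.+2 ('X^2 * Fp i)).
Proof.
have odd_from_even : forall i, fgseq (2*i) = (hom i.+1 (Fp i.+1), hom i.+1 ('X * Fp i)) ->
   fgseq (2*i).+1 = (hom i.+1 (Fp i.+1), hom i.+2 ('X^2 * Fp i)).
  move=> j hj; rewrite /= hj step_even vz_hom.
  by rewrite mulrA -expr2.
elim: i => [|i [_ h1]].
  have h0 : fgseq (2*0) = (hom 1 (Fp 1), hom 1 ('X * Fp 0)).
    rewrite /= mulr1 !hom1 !coefX coefD coefX coef1 /=.
    by rewrite coefD coef1 coefX /= !(@addr0 F) (@add0r F) !scale1r scale0r add0r.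
  by split => //; apply: odd_from_even.
have h2 : fgseq (2*i.+1) = (hom i.+2 (Fp i.+2), hom i.+2 ('X * Fp i.+1)).
  have -> : (2 * i.+1 = (2*i).+2)%N by lia.
  change (step (2*i).+1 (fgseq (2*i).+1) = (hom i.+2 (Fp i.+2), hom i.+2 ('X * Fp i.+1))).
  rewrite h1 step_odd vx_hom ?Fp_size // hom_add vz_hom FpSS.
  by [].
by split => //; apply: odd_from_even.
Qed.

Lemma fg_step n : fgseq n.+1 = if odd n then (vx * (fgseq n).1 + (fgseq n).2, vz * (fgseq n).1)
  else ((fgseq n).1, vz * (fgseq n).2).
Proof.
have [i [->|->]] : exists i, n = (2*i)%N \/ n = (2*i).+1.
  exists n./2; rewrite -[in X in X = _ \/ _](odd_double_half n) -[in X in _ \/ X = _](odd_double_half n).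
  by case: (odd n); [right|left]; rewrite mul2n.
  change (step (2*i) (fgseq (2*i)) = if odd (2*i) then (vx * (fgseq (2*i)).1 + (fgseq (2*i)).2, vz * (fgseq (2*i)).1)
  else ((fgseq (2*i)).1, vz * (fgseq (2*i)).2)).
  by rewrite (proj1 (inv i)) step_even oddM.
change (step (2*i).+1 (fgseq (2*i).+1) = if odd (2*i).+1 then (vx * (fgseq (2*i).+1).1 + (fgseq (2*i).+1).2, vz * (fgseq (2*i).+1).1)
  else ((fgseq (2*i).+1).1, vz * (fgseq (2*i).+1).2)).
by rewrite (proj2 (inv i)) step_odd /= oddM.
Qed.

Lemma rowv_mx2 f g a b c d : rowv f g *m mx2 a b c d = rowv (f*a + g*c) (f*b + g*d).
Proof.
apply/rowP => j; rewrite !mxE !big_ord_recr big_ord0 /= !mxE /= add0r.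
by case: j => -[|[|]].
Qed.

Theorem corollary4 :
  (forall n : nat,
     rowv (fgseq n.+1).1 (fgseq n.+1).2 = rowv (fgseq n).1 (fgseq n).2 *m Mmx n)
  /\
  (forall i : nat, (1 <= i)%N ->
     rowv (fgseq (2 * i)).1 (fgseq (2 * i)).2
       = rowv (vx + vz) (vz ^+ 2) *m (Pmx ^+ i.-1 *m Umx)
     /\ rowv (fgseq (2 * i).+1).1 (fgseq (2 * i).+1).2
       = rowv (vx + vz) (vz ^+ 2) *m Pmx ^+ i).
Proof.
have P1 : forall n : nat,
     rowv (fgseq n.+1).1 (fgseq n.+1).2 = rowv (fgseq n).1 (fgseq n).2 *m Mmx n.
  move=> n; rewrite fg_step /Mmx; case: (odd n); rewrite /Umx /Emx rowv_mx2 /=.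
    by rewrite !mulr1 !mulr0 addr0 mulrC [_ * vz]mulrC.
  by rewrite !mulr1 !mulr0 addr0 add0r mulrC.
split => //.
have O : forall i, rowv (fgseq (2 * i).+1).1 (fgseq (2 * i).+1).2
       = rowv (vx + vz) (vz ^+ 2) *m Pmx ^+ i.
  elim=> [|i IH].
    rewrite P1 /Mmx /= /Emx rowv_mx2 expr0 mulmx1.
    by rewrite !mulr1 !mulr0 addr0 add0r expr2.
  have -> : (2 * i.+1).+1 = ((2 * i).+1).+1.+1 by rewrite mulnS.
  rewrite P1 P1 IH /Mmx /= oddM /= -!mulmxA exprSr /Pmx.
  congr (_ *m _). exact: (esym (exprSr (Umx *m Emx) i)).
move=> [|i] // _; split => //.
have -> : (2 * i.+1 = (2 * i).+1.+1)%N by rewrite mulnS.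
by rewrite P1 O /Mmx /= oddM /= mulmxA.
Qed.
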